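(* Let $\mathbb{K}$ be a perfect field, $I\subset\mathbb{K}[X_1,\dots,X_n]$ a zero-dimensional ideal, $Q=\mathbb{K}[X_1,\dots,X_n]/I$, and $P_{\min}\in\mathbb{K}[X_n]$ the minimal polynomial of $X_n$ in $Q$, factored as $P_{\min}=P_1^{e_1}\cdots P_K^{e_K}$ with the $P_k$ pairwise distinct irreducible polynomials and $e_k\ge1$. For $k\in\{1,\dots,K\}$ let $J_k=I+\langle P_k^{e_k}\rangle$, $Q_k=\mathbb{K}[X_1,\dots,X_n]/J_k$, $T_k=P_{\min}/P_k^{e_k}$, and define $\varphi_k:Q^*\to Q_k^*$ by $\varphi_k(\ell)(f)=\ell(T_k\hat f\bmod I)$, where $\hat f$ is any lift of $f\in Q_k$ to $\mathbb{K}[X_1,\dots,X_n]$. Then $\varphi_k$ is well defined, $\mathbb{K}$-linear and onto.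
   Context: $Q^*=\mathrm{Hom}_{\mathbb{K}}(Q,\mathbb{K})$ and $Q_k^*=\mathrm{Hom}_{\mathbb{K}}(Q_k,\mathbb{K})$. *)

(* Defs.v *)
From HB Require Import structures.
From mathcomp Require Import all_boot all_algebra.
From mathcomp Require Export mpoly.
Set Implicit Arguments. Unset Strict Implicit. Unset Printing Implicit Defensive.
Import GRing.Theory.
Local Open Scope ring_scope.

(* A perfect field: characteristic 0, or characteristic p with surjective Frobenius. *)
Definition perfect_field (K : fieldType) : Prop :=
  forall p : nat, p \in [pchar K] -> forall x : K, exists y : K, y ^+ p = x.

Definition is_ideal (K : fieldType) (n : nat) (I : {mpoly K[n]} -> Prop) : Prop :=
  [/\ I 0,
      forall p q, I p -> I q -> I (p + q)
    & forall r p, I p -> I (r * p)].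

(* Zero-dimensional: the quotient K[X]/I is finite dimensional over K, i.e.
   finitely many polynomials span K[X] modulo I. *)
Definition zero_dimensional (K : fieldType) (n : nat) (I : {mpoly K[n]} -> Prop) : Prop :=
  exists s : seq {mpoly K[n]}, forall p : {mpoly K[n]},
    exists c : nat -> K, I (p - \sum_(i < size s) c i *: s`_i).

Definition poly_in_var (K : fieldType) (n : nat) (j : 'I_n) (q : {poly K}) : {mpoly K[n]} :=
  (map_poly (fun c : K => c%:MP) q).['X_j].

Definition is_minpoly_var (K : fieldType) (n : nat) (I : {mpoly K[n]} -> Prop)
    (j : 'I_n) (P : {poly K}) : Prop :=
  [/\ P \is monic, I (poly_in_var j P)
    & forall q : {poly K}, q != 0 -> I (poly_in_var j q) -> (size P <= size q)%N].

Definition ideal_add_princ (K : fieldType) (n : nat) (I : {mpoly K[n]} -> Prop)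
    (g : {mpoly K[n]}) : {mpoly K[n]} -> Prop :=
  fun p => exists a b, I a /\ p = a + b * g.

(* Elements of Hom_K(K[X]/I, K), represented (via the universal property of the
   quotient) as K-linear maps K[X] -> K vanishing on I. *)
Definition in_dual (K : fieldType) (n : nat) (I : {mpoly K[n]} -> Prop)
    (l : {mpoly K[n]} -> K) : Prop :=
  (forall (a : K) (p q : {mpoly K[n]}), l (a *: p + q) = a * l p + l q)
  /\ (forall p, I p -> l p = 0).

Definition phi_map (K : fieldType) (n : nat) (T : {mpoly K[n]})
    (l : {mpoly K[n]} -> K) : {mpoly K[n]} -> K :=
  fun f => l (T * f).

(* Main.v *)
Require Import Defs.
From HB Require Import structures.
From mathcomp Require Import all_boot all_algebra.
From mathcomp Require Import mpoly.
Import GRing.Theory.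
Local Open Scope ring_scope.

Section Aux.
Variables (K : fieldType) (n : nat) (j : 'I_n).

Lemma piv_mul (p q : {poly K}) :
  poly_in_var j (p * q) = poly_in_var j p * poly_in_var j q.
Proof.
rewrite /poly_in_var.
have -> : map_poly (fun c : K => c%:MP) (p * q) =
   map_poly (fun c : K => c%:MP) p * map_poly (fun c : K => c%:MP) q :> {poly {mpoly K[n]}}.
  by rewrite rmorphM.
by rewrite hornerM.
Qed.

Lemma piv_add (p q : {poly K}) :
  poly_in_var j (p + q) = poly_in_var j p + poly_in_var j q.
Proof.
rewrite /poly_in_var.
have -> : map_poly (fun c : K => c%:MP) (p + q) =
   map_poly (fun c : K => c%:MP) p + map_poly (fun c : K => c%:MP) q :> {poly {mpoly K[n]}}.
  by rewrite rmorphD.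
by rewrite hornerD.
Qed.

Lemma piv_one : poly_in_var j (1 : {poly K}) = 1.
Proof. by rewrite /poly_in_var map_polyC /= hornerC. Qed.

End Aux.

Lemma coprime_irr (K : fieldType) (p q : {poly K}) :
  irreducible_poly p -> irreducible_poly q -> p \is monic -> q \is monic ->
  p != q -> coprimep p q.
Proof.
move=> ip iq mp mq npq; rewrite coprimep_def.
case: (boolP (size (gcdp p q) == 1%N)) => // hs.
have h1 := ip _ hs (dvdp_gcdl p q).
have h2 := iq _ hs (dvdp_gcdr p q).
have : p %= q by rewrite -(eqp_ltrans h1) h2.
by rewrite eqp_monic // (negbTE npq).
Qed.

Theorem lemma8 (K : fieldType) (n : nat) (I : {mpoly K[n.+1]} -> Prop)
    (Pmin : {poly K}) (r : nat) (P : 'I_r -> {poly K}) (e : 'I_r -> nat)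
    (k : 'I_r) :
  perfect_field K ->
  is_ideal I ->
  zero_dimensional I ->
  is_minpoly_var I ord_max Pmin ->
  (forall i, irreducible_poly (P i)) ->
  (forall i, P i \is monic) ->
  (forall i j, i != j -> P i != P j) ->
  (forall i, (0 < e i)%N) ->
  Pmin = \prod_(i < r) P i ^+ e i ->
  let Jk := ideal_add_princ I (poly_in_var ord_max (P k ^+ e k)) in
  let Tk := poly_in_var ord_max (Pmin %/ P k ^+ e k) in
  (* well defined: phi_k maps Q^* into Q_k^* *)
  (forall l, in_dual I l -> in_dual Jk (phi_map Tk l))
  (* K-linear *)
  /\ (forall (a : K) (l1 l2 : {mpoly K[n.+1]} -> K) (f : {mpoly K[n.+1]}),
        phi_map Tk (fun p => a * l1 p + l2 p) f = a * phi_map Tk l1 f + phi_map Tk l2 f)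
  (* onto *)
  /\ (forall psi, in_dual Jk psi ->
        exists l, in_dual I l /\ forall f, phi_map Tk l f = psi f).
Proof.
move=> _ [I0 ID IM] _ [_ IP _] Pirr Pmon Pdist epos Pdef Jk Tk.
set G := P k ^+ e k.
set Tp := \prod_(i < r | i != k) P i ^+ e i.
have GM : G \is monic by apply: monic_exp.
have Gn0 : G != 0 by apply: monic_neq0.
have PminE : Pmin = Tp * G by rewrite Pdef (bigD1 k) //= mulrC.
have TpE : Pmin %/ G = Tp by rewrite PminE mulpK.
have TG : I (Tk * poly_in_var ord_max G).
  by rewrite /Tk TpE -piv_mul -PminE.
have cop : coprimep Tp G.
  rewrite /Tp; apply: (big_ind (fun x => coprimep x G)).
  - exact: coprime1p.
  - by move=> x y hx hy; rewrite coprimepMl hx hy.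
  - move=> i ik; apply/coprimep_expl/coprimep_expr/coprime_irr => //.
    exact: Pdist.
split.
  move=> l [lin lI]; split.
    by move=> a p q; rewrite /phi_map mulrDr -scalerAr lin.
  move=> p [a [b [Ia ->]]]; rewrite /phi_map; apply: lI.
  rewrite mulrDr mulrA [Tk * b]mulrC -mulrA; apply: ID; first exact: IM.
  exact: IM.
split.
  by move=> a l1 l2 f.
move=> psi [lin pJ].
case/Bezout_eq1_coprimepP: cop => [[u v]] /= huv.
exists (fun h => psi (poly_in_var ord_max u * h)); split.
  split.
    by move=> a p q; rewrite mulrDr -scalerAr lin.
  move=> p Ip; apply: pJ; exists (poly_in_var ord_max u * p), 0; split.
    exact: IM.
  by rewrite mul0r addr0.
move=> f; rewrite /phi_map /Tk TpE mulrA.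
have E : poly_in_var (@ord_max n) u * poly_in_var (@ord_max n) Tp +
   poly_in_var (@ord_max n) v * poly_in_var (@ord_max n) G = 1.
  by rewrite -!piv_mul -piv_add huv piv_one.
set U := poly_in_var (@ord_max n) u; set T := poly_in_var _ Tp.
set V := poly_in_var (@ord_max n) v; set Gm := poly_in_var (@ord_max n) G.
transitivity (psi ((U * T + V * Gm) * f)); last by rewrite E mul1r.
rewrite mulrDl; have := lin 1 (U * T * f) (V * Gm * f).
rewrite scale1r mul1r => ->.
suff -> : psi (V * Gm * f) = 0 by rewrite addr0.
apply: pJ; exists 0, (V * f); split => //.
by rewrite add0r -!mulrA [Gm * _]mulrC.
Qed.
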